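(* Let $A=(a_1,\dots,a_k)$ be a minimal telescopic sequence of positive integers (no $a_i$ is an $\mathbb{N}_0$-linear combination of the other terms). Then: (i) for all distinct $x,y,z\in\{1,\dots,k\}$, at least one of $\gcd(a_x,a_y)$, $\gcd(a_x,a_z)$, $\gcd(a_y,a_z)$ is greater than $1$; and (ii) for all distinct $x,y,z,w\in\{1,\dots,k\}$, either $\gcd(a_x,a_y)>1$ or $\gcd(a_z,a_w)>1$.
   Context: For a sequence $A=(a_1,\dots,a_k)$ of non-negative integers, let $d_i=\gcd(a_1,\dots,a_i)$ and $S_i=\langle a_1,\dots,a_i\rangle$ (the set of $\mathbb{N}_0$-linear combinations of $a_1,\dots,a_i$) for $i\in\{1,\dots,k\}$, and let $c_j=d_{j-1}/d_j$ for $j\in\{2,\dots,k\}$. The sequence $A$ is telescopic if $c_ja_j\in S_{j-1}$ for all $j\in\{2,\dots,k\}$. *)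

(* Defs.v *)
From mathcomp Require Import all_boot.
Set Implicit Arguments. Unset Strict Implicit. Unset Printing Implicit Defensive.

(* Sequences A = (a_1,...,a_k) are represented as s : seq nat, with a_i = nth 0 s (i-1). *)

Definition in_semigroup (s : seq nat) (n : nat) : Prop :=
  exists c : seq nat, size c = size s /\ n = \sum_(i < size s) nth 0 c i * nth 0 s i.

Definition dgcd (s : seq nat) (i : nat) : nat := foldr gcdn 0 (take i s).

Definition Sgen (s : seq nat) (i : nat) (n : nat) : Prop := in_semigroup (take i s) n.

Definition cfac (s : seq nat) (j : nat) : nat := dgcd s j.-1 %/ dgcd s j.

Definition telescopic (s : seq nat) : Prop :=
  forall j, 2 <= j <= size s -> Sgen s j.-1 (cfac s j * nth 0 s j.-1).

Definition drop_at (s : seq nat) (i : nat) : seq nat := take i s ++ drop i.+1 s.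

Definition minimal_seq (s : seq nat) : Prop :=
  forall i, i < size s -> ~ in_semigroup (drop_at s i) (nth 0 s i).

(* Main.v *)
Require Import Defs.
From mathcomp Require Import all_boot.
From mathcomp Require Import zify.

Lemma foldr_gcd_dvd (l : seq nat) x : x \in l -> foldr gcdn 0 l %| x.
Proof.
elim: l => [//|a l IH] /=; rewrite inE => /orP [/eqP ->|H].
  exact: dvdn_gcdl.
exact: dvdn_trans (dvdn_gcdr _ _) (IH H).
Qed.

Lemma dgcd_dvd s i m : m < i -> m < size s -> dgcd s i %| nth 0 s m.
Proof.
move=> Hi Hs; rewrite /dgcd -(nth_take 0 Hi); apply: foldr_gcd_dvd.
apply: mem_nth; rewrite size_take; case: ifP => _ //.
Qed.

Lemma insemi_cat t u n : in_semigroup t n -> in_semigroup (t ++ u) n.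
Proof.
move=> [c [Hc ->]]; exists (c ++ nseq (size u) 0); split.
  by rewrite !size_cat Hc size_nseq.
rewrite size_cat big_split_ord /=.
rewrite [X in _ + X]big1 ?addn0; last first.
  move=> i _ /=; rewrite nth_cat -Hc ltnNge leq_addr /= addKn nth_nseq.
  by case: ifP.
apply: eq_bigr => i _; rewrite !nth_cat Hc ltn_ord //.
Qed.

Section S.
Variable A : seq nat.
Hypothesis pos : forall i, i < size A -> 0 < nth 0 A i.
Hypothesis tele : telescopic A.
Hypothesis mini : minimal_seq A.

Lemma core p q : p < q -> q.+1 < size A ->
  gcdn (nth 0 A p) (nth 0 A q) = 1 -> False.
Proof.
move=> Hpq Hq g1.
have D : forall i, q < i -> dgcd A i = 1.
  move=> i Hi; apply/eqP; rewrite -dvdn1 -g1 dvdn_gcd.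
  by rewrite !dgcd_dvd //; lia.
have Hj : 2 <= q.+2 <= size A by lia.
have := tele _ Hj.
rewrite /cfac /= D // D // divn1 mul1n => H.
apply: (mini _ Hq); rewrite /drop_at; exact: insemi_cat H.
Qed.

Lemma pair_ok x y : x < size A -> y < size A -> x != y ->
  x.+1 < size A -> y.+1 < size A -> 1 < gcdn (nth 0 A x) (nth 0 A y).
Proof.
move=> Hx Hy Hxy Hx1 Hy1.
have g0 : 0 < gcdn (nth 0 A x) (nth 0 A y) by rewrite gcdn_gt0 pos.
rewrite ltnNge; apply/negP => Hle.
have g1 : gcdn (nth 0 A x) (nth 0 A y) = 1 by lia.
case: (ltngtP x y) => [h|h|h].
- exact: (core _ _ h Hy1 g1).
- by apply: (core _ _ h Hx1); rewrite gcdnC.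
- by rewrite h eqxx in Hxy.
Qed.
End S.

(* indices are 0-based: x < size A corresponds to x+1 in {1,...,k} *)
Theorem mainTheorem12 (A : seq nat) :
  (forall i, i < size A -> 0 < nth 0 A i) ->
  telescopic A -> minimal_seq A ->
  (forall x y z, x < size A -> y < size A -> z < size A ->
     x != y -> x != z -> y != z ->
     [\/ 1 < gcdn (nth 0 A x) (nth 0 A y),
         1 < gcdn (nth 0 A x) (nth 0 A z) |
         1 < gcdn (nth 0 A y) (nth 0 A z)]) /\
  (forall x y z w, x < size A -> y < size A -> z < size A -> w < size A ->
     uniq [:: x; y; z; w] ->
     1 < gcdn (nth 0 A x) (nth 0 A y) \/ 1 < gcdn (nth 0 A z) (nth 0 A w)).
Proof.
move=> pos tele mini; split.
  move=> x y z Hx Hy Hz Hxy Hxz Hyz.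
  case: (ltnP x.+1 (size A)) => h1.
    case: (ltnP y.+1 (size A)) => h2.
      by constructor 1; apply: pair_ok.
    constructor 2; apply: pair_ok => //; lia.
  constructor 3; apply: pair_ok => //; lia.
move=> x y z w Hx Hy Hz Hw /=; rewrite !inE !negb_or.
move=> /and4P [/and3P [Hxy Hxz Hxw] /andP [Hyz Hyw] Hzw _].
case: (ltnP x.+1 (size A)) => h1.
  case: (ltnP y.+1 (size A)) => h2.
    by left; apply: pair_ok.
  right; apply: pair_ok => //; lia.
right; apply: pair_ok => //; lia.
Qed.
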